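(* Assume $\operatorname{char}\widetilde K\neq2,3$. Let $A,B,C,D\in\mathbb{Z}[\alpha_1,\dots,\alpha_6]$ be the polynomials defined below (with $u=1$). Let $\omega=(\omega_1,\dots,\omega_6)\in\mathbb{R}^6$ satisfy $\omega_1<\omega_2<\omega_3<\omega_4<\omega_5<\omega_6$ (a weight vector in the relative interior of a Type (I) cell). Then $$\operatorname{in}_\omega(A)=6\alpha_4^2\alpha_5^2\alpha_6^2,\quad \operatorname{in}_\omega(B)=4\alpha_3^2\alpha_4^2\alpha_5^4\alpha_6^4,\quad \operatorname{in}_\omega(C)=8\alpha_3^2\alpha_4^4\alpha_5^6\alpha_6^6,\quad \operatorname{in}_\omega(D)=\alpha_2^2\alpha_3^4\alpha_4^6\alpha_5^8\alpha_6^{10}.$$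
   Context: Here $\widetilde K$ is the residue field of the underlying non-Archimedean field. Set $\Delta_{ij}=(\alpha_i-\alpha_j)^2$. $A=\sum\Delta_{ij}\Delta_{kl}\Delta_{mn}$ over the 15 partitions $\{\{i,j\},\{k,l\},\{m,n\}\}$ of $\{1,\dots,6\}$ into pairs; $B=\sum(\Delta_{ij}\Delta_{jk}\Delta_{ki})(\Delta_{lm}\Delta_{mn}\Delta_{nl})$ over the 10 partitions $\{\{i,j,k\},\{l,m,n\}\}$ into two triples; $C=\sum(\Delta_{ij}\Delta_{jk}\Delta_{ki})(\Delta_{lm}\Delta_{mn}\Delta_{nl})(\Delta_{il}\Delta_{jm}\Delta_{kn})$ over the 60 choices of a partition into two triples $\{i,j,k\},\{l,m,n\}$ together with a bijective pairing $\{\{i,l\},\{j,m\},\{k,n\}\}$ between them; $D=\prod_{i<j}\Delta_{ij}$. For a polynomial $P$ and $\omega\in\mathbb{R}^6$, $\operatorname{in}_\omega(P)$ is the sum of the terms $c\,\alpha^m$ of $P$ for which $\langle\omega,m\rangle$ is maximal. *)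

(* Defs.v *)
From HB Require Import structures.
From mathcomp Require Import all_boot all_order all_algebra.
From mathcomp Require Import mpoly.
Set Implicit Arguments. Unset Strict Implicit. Unset Printing Implicit Defensive.
Import Order.TTheory GRing.Theory Num.Theory.
Local Open Scope ring_scope.

(* Polynomials in Z[alpha_1,...,alpha_6]; alpha_k is 'X_(k-1), k = 1..6. *)
Notation P6 := {mpoly int[6]}.

Definition alpha (i : 'I_6) : P6 := 'X_i.

Definition Delta (i j : 'I_6) : P6 := (alpha i - alpha j) ^+ 2.

Definition pairprod (S : {set 'I_6}) : P6 :=
  \prod_(i in S) \prod_(j in S | (i < j)%N) Delta i j.

Definition blockpart (k : nat) (P : {set {set 'I_6}}) : bool :=
  partition P [set: 'I_6] && [forall S in P, #|S| == k].

Definition Apoly : P6 :=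
  \sum_(P : {set {set 'I_6}} | blockpart 2 P) \prod_(S in P) pairprod S.

Definition Bpoly : P6 :=
  \sum_(P : {set {set 'I_6}} | blockpart 3 P) \prod_(S in P) pairprod S.

(* a partition P into two triples together with a bijective pairing M between
   the two triples, i.e. a partition M into pairs each meeting each triple
   in exactly one point *)
Definition Cpoly : P6 :=
  \sum_(P : {set {set 'I_6}} | blockpart 3 P)
   \sum_(M : {set {set 'I_6}} | blockpart 2 M &&
          [forall S in M, forall T in P, #|S :&: T| == 1%N])
     ((\prod_(T in P) pairprod T) * \prod_(S in M) pairprod S).

Definition Dpoly : P6 := \prod_(i : 'I_6) \prod_(j : 'I_6 | (i < j)%N) Delta i j.

Definition wdeg (R : numDomainType) (w : 'I_6 -> R) (m : 'X_{1..6}) : R :=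
  \sum_(i < 6) w i * (m i)%:R.

Definition init_form (R : numDomainType) (w : 'I_6 -> R) (p : P6) : P6 :=
  \sum_(m <- msupp p | all (fun m' => wdeg w m' <= wdeg w m) (msupp p))
    p@_m *: 'X_[m].

Definition al (k : nat) : P6 := 'X_(@inord 5 k.-1).

(* Main.v *)
Require Import Defs.
From HB Require Import structures.
From mathcomp Require Import all_boot all_order all_algebra.
From mathcomp Require Import mpoly.
From mathcomp Require Import ring lra.
Set Implicit Arguments. Unset Strict Implicit. Unset Printing Implicit Defensive.
Import Order.TTheory GRing.Theory Num.Theory.
Local Open Scope ring_scope.

Definition toM (s : seq nat) : 'X_{1..6} := [multinom nth 0%N s i | i < 6].

Section LTsec.
Variables (R : realFieldType) (w : 'I_6 -> R).

Definition sbelow (W : R) (p : P6) := forall m, m \in msupp p -> wdeg w m < W.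
Definition wbelow (W : R) (p : P6) := forall m, m \in msupp p -> wdeg w m <= W.

Lemma wdegD m1 m2 : wdeg w (m1 + m2)%MM = wdeg w m1 + wdeg w m2.
Proof.
rewrite /wdeg -big_split /=; apply: eq_bigr => i _.
by rewrite mnmDE natrD mulrDr.
Qed.

Lemma wdeg0 : wdeg w 0%MM = 0.
Proof. by rewrite /wdeg big1 // => i _; rewrite mnm0E mulr0. Qed.

Lemma wdegU (i : 'I_6) k : wdeg w (U_(i) *+ k)%MM = w i * k%:R.
Proof.
rewrite /wdeg (bigD1 i) //= big1 ?addr0 => [|j /negbTE ji].
  by rewrite mulmnE mnm1E eqxx mul1n.
by rewrite mulmnE mnm1E eq_sym ji mul0n mulr0.
Qed.

Lemma sbelowW W p : sbelow W p -> wbelow W p.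
Proof. by move=> h m /h /ltW. Qed.

Lemma sbelow_trans W1 W2 p : W1 <= W2 -> sbelow W1 p -> sbelow W2 p.
Proof. by move=> le h m /h /lt_le_trans; apply. Qed.

Lemma sbelow0 W : sbelow W 0.
Proof. by move=> m; rewrite mcoeff_msupp mcoeff0 eqxx. Qed.

Lemma sbelowD W p q : sbelow W p -> sbelow W q -> sbelow W (p + q).
Proof. by move=> hp hq m /msuppD_le; rewrite mem_cat => /orP[/hp|/hq]. Qed.

Lemma sbelowN W p : sbelow W p -> sbelow W (- p).
Proof. by move=> hp m; rewrite (perm_mem (msuppN _)) => /hp. Qed.

Lemma sbelowZ W (c : int) p : sbelow W p -> sbelow W (c *: p).
Proof. by move=> hp m /msuppZ_le /hp. Qed.

Lemma sbelowX W m : wdeg w m < W -> sbelow W 'X_[m].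
Proof. by move=> h m'; rewrite msuppX inE => /eqP ->. Qed.

Lemma wbelowX m : wbelow (wdeg w m) 'X_[m].
Proof. by move=> m'; rewrite msuppX inE => /eqP ->. Qed.

Lemma wbelowZ W (c : int) p : wbelow W p -> wbelow W (c *: p).
Proof. by move=> hp m /msuppZ_le /hp. Qed.

Lemma sbelowMl W1 W2 p q : sbelow W1 p -> wbelow W2 q -> sbelow (W1 + W2) (p * q).
Proof.
move=> hp hq m /msuppM_le /allpairsP [[m1 m2] /= [/hp h1 /hq h2 ->]].
by rewrite wdegD; apply: ltr_leD.
Qed.

Lemma sbelowMr W1 W2 p q : wbelow W1 p -> sbelow W2 q -> sbelow (W1 + W2) (p * q).
Proof.
move=> hp hq m /msuppM_le /allpairsP [[m1 m2] /= [/hp h1 /hq h2 ->]].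
by rewrite wdegD; apply: ler_ltD.
Qed.

Definition LT (p : P6) (c : int) m :=
  exists2 r, p = c *: 'X_[m] + r & sbelow (wdeg w m) r.

Lemma LT1 : LT 1 1 0%MM.
Proof. exists 0; first by rewrite scale1r mpolyX0 addr0. by apply: sbelow0. Qed.

Lemma LTM p q c1 c2 m1 m2 : LT p c1 m1 -> LT q c2 m2 -> LT (p * q) (c1 * c2) (m1 + m2)%MM.
Proof.
move=> [r1 -> h1] [r2 -> h2].
exists (c1 *: 'X_[m1] * r2 + r1 * (c2 *: 'X_[m2]) + r1 * r2).
  rewrite mulrDl !mulrDr -scalerAl -scalerAr scalerA mpolyXD.
  by rewrite !addrA.
rewrite wdegD; apply: sbelowD; [apply: sbelowD|].
- by apply: sbelowMr => //; apply: wbelowZ; apply: wbelowX.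
- by apply: sbelowMl => //; apply: wbelowZ; apply: wbelowX.
- by apply: sbelowMl => //; apply: sbelowW.
Qed.

Lemma LTD p q c1 c2 m : LT p c1 m -> LT q c2 m -> LT (p + q) (c1 + c2) m.
Proof.
move=> [r1 -> h1] [r2 -> h2]; exists (r1 + r2); last by apply: sbelowD.
by rewrite scalerDl; rewrite -!addrA; congr (_ + _); rewrite addrCA.
Qed.

Lemma LTlow p q c m : LT p c m -> sbelow (wdeg w m) q -> LT (q + p) c m.
Proof.
move=> [r -> h] hq; exists (q + r); last by apply: sbelowD.
by rewrite addrCA.
Qed.

Lemma LT_sbelow p m W : LT p 1 m -> wdeg w m < W -> sbelow W p.
Proof.
move=> [r -> h] lt; apply: sbelowD; first by apply: sbelowZ; apply: sbelowX.
exact: sbelow_trans (ltW lt) h.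
Qed.

Lemma LT_prod (I : Type) (r : seq I) (P : pred I) (F : I -> P6) (M : I -> 'X_{1..6}) :
  (forall i, P i -> LT (F i) 1 (M i)) ->
  LT (\prod_(i <- r | P i) F i) 1 (\big[+%MM/0%MM]_(i <- r | P i) M i).
Proof.
move=> h; elim: r => [|x r IH]; first by rewrite !big_nil; apply: LT1.
rewrite !big_cons; case: (boolP (P x)) => // Px.
by have := LTM (h x Px) IH; rewrite mulr1.
Qed.

Lemma init_LT p c m : c != 0 -> LT p c m -> init_form w p = c *: 'X_[m].
Proof.
move=> c0 [r pE hr].
have rm : r@_m = 0.
  apply: memN_msupp_eq0; apply/negP => /hr; by rewrite ltxx.
have pm : p@_m = c by rewrite pE mcoeffD mcoeffZ mcoeffX eqxx rm addr0 mulr1.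
have mp : m \in msupp p by rewrite mcoeff_msupp pm.
have sub : forall m', m' \in msupp p -> m' != m -> wdeg w m' < wdeg w m.
  move=> m' /[swap] ne; rewrite pE => /msuppD_le; rewrite mem_cat => /orP[|/hr //].
  by move/msuppZ_le; rewrite msuppX inE (negbTE ne).
rewrite /init_form big_seq_cond (eq_bigl (fun m' => m' == m)); last first.
  move=> m' /=; case: (boolP (m' == m)) => [/eqP -> | ne]; first by rewrite mp /=; apply/allP => m'' h; case: (eqVneq m'' m) => [->//|/(sub _ h)/ltW].
  case: (boolP (m' \in msupp p)) => //= h; apply/negP => /allP /(_ _ mp).
  by rewrite leNgt (sub _ h ne).
rewrite -big_filter.
have -> : [seq m' <- msupp p | m' == m] = [:: m].
  by rewrite (@filter_pred1_uniq _ _ m) ?msupp_uniq.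
by rewrite big_seq1 pm.
Qed.

End LTsec.


Definition Phi (r : nat -> nat -> bool) : P6 :=
  \prod_(i < 6) \prod_(j < 6 | r i j && (i < j)%N) Delta i j.

Definition seqL (r : nat -> nat -> bool) : seq nat :=
  mkseq (fun k => 2 * count (fun i => r i k && (i < k)) (iota 0 6))%N 6.

Lemma sum_count (s : seq nat) (b : pred nat) :
  (\sum_(i <- s) (b i : nat))%N = count b s.
Proof.
rewrite -sum1_count [RHS]big_mkcond /=; apply: eq_bigr => i _; by case: (b i).
Qed.

Lemma bridge (r : nat -> nat -> bool) :
  (\big[+%MM/0%MM]_(i < 6) \big[+%MM/0%MM]_(j < 6 | r i j && (i < j)%N) (U_(j) *+ 2)%MM)
  = toM (seqL r).
Proof.
apply/mnmP => k; rewrite mnm_sumE mnmE nth_mkseq //.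
rewrite (eq_bigr (fun i : 'I_6 => (r i k && (i < k)) * 2)%N); last first.
  move=> i _; rewrite mnm_sumE big_mkcond /= (bigD1 k) //= big1 ?addn0.
    by rewrite mulmnE mnm1E eqxx mul1n; case: (_ && _).
  move=> j /negbTE jk; case: (_ && _) => //; by rewrite mulmnE mnm1E jk.
rewrite -big_distrl /= mulnC; congr (_ * _)%N.
rewrite -(big_mkord xpredT (fun i => (r i k && (i < k)%N) : nat)).
by rewrite /index_iota subn0 sum_count.
Qed.

Section LTD.
Variables (R : realFieldType) (w : 'I_6 -> R).
Hypothesis hw : forall i j : 'I_6, (i < j)%N -> w i < w j.

Lemma wdegU1 (i : 'I_6) : wdeg w U_(i)%MM = w i.
Proof.
rewrite /wdeg (bigD1 i) //= big1 ?addr0 => [|j /negbTE ji].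
  by rewrite mnm1E eqxx mulr1.
by rewrite mnm1E eq_sym ji mulr0.
Qed.

Lemma LT_Delta (i j : 'I_6) : (i < j)%N -> LT w (Delta i j) 1 (U_(j) *+ 2)%MM.
Proof.
move=> ij.
exists ('X_[U_(i) *+ 2] - 2%:R *: 'X_[U_(i) + U_(j)]).
  rewrite /Delta /alpha sqrrB !mpolyXn mpolyXD scaler_nat scale1r.
  by rewrite addrC addrA.
apply: sbelowD; last apply: sbelowN; last apply: sbelowZ; apply: sbelowX.
  by rewrite !wdegU ltr_pM2r ?ltr0n // hw.
by rewrite wdegD !wdegU1 wdegU mulr_natr mulr2n ltrD2r hw.
Qed.

Lemma LT_Phi (r : nat -> nat -> bool) : LT w (Phi r) 1 (toM (seqL r)).
Proof.
rewrite -bridge /Phi; apply: LT_prod => i _; apply: LT_prod => j /andP[_ ij].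
exact: LT_Delta.
Qed.
End LTD.


Definition dom (s t : seq nat) : bool :=
  [&& size s == 6%N, size t == 6%N, sumn s == sumn t,
      all (fun k => sumn (drop k s) <= sumn (drop k t))%N (iota 1 5) &
      has (fun k => sumn (drop k s) < sumn (drop k t))%N (iota 1 5)].

Lemma pp (R : realFieldType) (a b c d : R) : a < b -> c <= d -> 0 <= (b - a) * (d - c).
Proof. by move=> h1 h2; apply: mulr_ge0; rewrite subr_ge0 // ltW. Qed.
Lemma ps (R : realFieldType) (a b c d : R) : a < b -> c < d -> 0 < (b - a) * (d - c).
Proof. by move=> h1 h2; apply: mulr_gt0; rewrite subr_gt0. Qed.

Section Dom.
Variables (R : realFieldType) (w : 'I_6 -> R).
Hypothesis hw : forall i j : 'I_6, (i < j)%N -> w i < w j.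

Lemma wdeg_toM s : wdeg w (toM s) = \sum_(k < 6) w (inord k) * (nth 0%N s k)%:R.
Proof. by apply: eq_bigr => i _; rewrite mnmE inord_val. Qed.

Lemma dom_lt s t : dom s t -> wdeg w (toM s) < wdeg w (toM t).
Proof.
case: s => [|a0 [|a1 [|a2 [|a3 [|a4 [|a5 [|? ?]]]]]]]; rewrite /dom //=.
case: t => [|b0 [|b1 [|b2 [|b3 [|b4 [|b5 [|? ?]]]]]]]; rewrite //=.
rewrite !wdeg_toM !big_ord_recr !big_ord0 /= !addn0.
case/and3P => /eqP e /and5P[h1 h2 h3 h4 /andP[h5 _]] hk.
move: h1 h2 h3 h4 h5; rewrite -!(ler_nat R) !natrD => h1 h2 h3 h4 h5.
move/(congr1 (fun n => n%:R : R)): e; rewrite !natrD => e.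
have w01 : w (inord 0) < w (inord 1) by apply: hw; rewrite !inordK.
have w12 : w (inord 1) < w (inord 2) by apply: hw; rewrite !inordK.
have w23 : w (inord 2) < w (inord 3) by apply: hw; rewrite !inordK.
have w34 : w (inord 3) < w (inord 4) by apply: hw; rewrite !inordK.
have w45 : w (inord 4) < w (inord 5) by apply: hw; rewrite !inordK.
set W0 := w (inord 0) in w01 *; set W1 := w (inord 1) in w01 w12 *.
set W2 := w (inord 2) in w12 w23 *; set W3 := w (inord 3) in w23 w34 *.
set W4 := w (inord 4) in w34 w45 *; set W5 := w (inord 5) in w45 *.
have p1 := pp w01 h1; have p2 := pp w12 h2; have p3 := pp w23 h3.
have p4 := pp w34 h4; have p5 := pp w45 h5.
move: hk; rewrite -!(ltr_nat R) !natrD.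
move=> hk; rewrite !add0r -subr_gt0.
have -> : (W0 * b0%:R + W1 * b1%:R + W2 * b2%:R + W3 * b3%:R + W4 * b4%:R + W5 * b5%:R) - (W0 * a0%:R + W1 * a1%:R + W2 * a2%:R + W3 * a3%:R + W4 * a4%:R + W5 * a5%:R) = W0 * ((b0%:R + (b1%:R + (b2%:R + (b3%:R + (b4%:R + b5%:R))))) - (a0%:R + (a1%:R + (a2%:R + (a3%:R + (a4%:R + a5%:R)))))) + (W1 - W0) * ((b1%:R + (b2%:R + (b3%:R + (b4%:R + b5%:R)))) - (a1%:R + (a2%:R + (a3%:R + (a4%:R + a5%:R))))) + (W2 - W1) * ((b2%:R + (b3%:R + (b4%:R + b5%:R))) - (a2%:R + (a3%:R + (a4%:R + a5%:R)))) + (W3 - W2) * ((b3%:R + (b4%:R + b5%:R)) - (a3%:R + (a4%:R + a5%:R))) + (W4 - W3) * ((b4%:R + b5%:R) - (a4%:R + a5%:R)) + (W5 - W4) * (b5%:R - a5%:R) by ring.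
rewrite e subrr mulr0 add0r.
move: hk; case/orP => [/(ps w01)|/orP[/(ps w12)|/orP[/(ps w23)|/orP[/(ps w34)|/orP[/(ps w45)|//]]]]] => q.
all: lra.
Qed.
End Dom.

Section SumLT.
Variables (R : realFieldType) (w : 'I_6 -> R).
Hypothesis hw : forall i j : 'I_6, (i < j)%N -> w i < w j.

Lemma sumLT (X : eqType) (s : seq X) (T : X -> P6) (L : X -> seq nat) (m0 : seq nat) :
  (forall x, x \in s -> LT w (T x) 1 (toM (L x))) ->
  all (fun x => (L x == m0) || dom (L x) m0) s ->
  LT w (\sum_(x <- s) T x) (count (fun x => L x == m0) s)%:Z (toM m0).
Proof.
elim: s => [|x s IH] hT hall.
  rewrite big_nil /=; exists 0; first by rewrite scale0r addr0.
  exact: sbelow0.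
rewrite big_cons /=; move: hall => /= /andP[hx hall].
have IH' := IH (fun y hy => hT y (mem_behead (s:=x :: s) hy)) hall.
have Tx := hT x (mem_head _ _).
case: (eqVneq (L x) m0) hx => [E _ | ne /= hd].
  rewrite PoszD; rewrite -E in IH' *; exact: LTD.
rewrite add0n; apply: LTlow => //; apply: (LT_sbelow Tx); exact: dom_lt.
Qed.
End SumLT.


Definition rel_of (c : seq nat) (i j : nat) : bool := nth 0%N c i == nth 0%N c j.

Definition Gp (c : seq nat) : {set {set 'I_6}} :=
  equivalence_partition (fun i j : 'I_6 => rel_of c i j) setT.

Definition FP (P : {set {set 'I_6}}) : P6 := \prod_(S in P) pairprod S.

Lemma rel_equiv c : {in [set: 'I_6] & &, equivalence_rel (fun i j : 'I_6 => rel_of c i j)}.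
Proof. by move=> x y z _ _ _; rewrite /rel_of eqxx; split=> // /eqP ->. Qed.

Lemma G_part c : partition (Gp c) setT.
Proof. exact: equivalence_partitionP (rel_equiv c). Qed.

Lemma pblock_G c (i j : 'I_6) : (j \in pblock (Gp c) i) = rel_of c i j.
Proof. by rewrite (pblock_equivalence_partition (rel_equiv c)). Qed.

Lemma prodP (P : {set {set 'I_6}}) : partition P setT ->
  FP P = \prod_(i < 6) \prod_(j < 6 | (j \in pblock P i) && (i < j)%N) Delta i j.
Proof.
case/and3P => /eqP cov tiP _.
pose H := fun i : 'I_6 => \prod_(j < 6 | (j \in pblock P i) && (i < j)%N) Delta i j.
transitivity (\prod_(S in P) \prod_(i in S) H i).
  apply: eq_bigr => S SP; apply: eq_bigr => i iS; by rewrite /H (def_pblock tiP SP iS).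
rewrite -(@big_trivIset _ _ _ _ P H tiP) cov; apply: eq_bigl => i; by rewrite in_setT.
Qed.

Lemma FP_G c : FP (Gp c) = Phi (rel_of c).
Proof.
rewrite prodP ?G_part // /Phi; apply: eq_bigr => i _; apply: eq_bigl => j.
by rewrite pblock_G.
Qed.

Lemma card_count (A : {set 'I_6}) : #|A| = count (fun j => (inord j : 'I_6) \in A) (iota 0 6).
Proof.
rewrite -sum_count -sum1_card big_mkcond.
rewrite (_ : iota 0 6 = index_iota 0 6) // big_mkord.
by apply: eq_bigr => i _; rewrite inord_val; case: (i \in A).
Qed.

Definition goodk (k : nat) (c : seq nat) : bool :=
  [&& size c == 6%N,
      all (fun i => nth 0%N c i <= i)%N (iota 0 6),
      all (fun i => nth 0%N c (nth 0%N c i) == nth 0%N c i) (iota 0 6) &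
      all (fun i => count (fun j => nth 0%N c j == nth 0%N c i) (iota 0 6) == k) (iota 0 6)].

Definition cands : seq (seq nat) :=
  flatten (map (fun a0 =>
  flatten (map (fun a1 =>
  flatten (map (fun a2 =>
  flatten (map (fun a3 =>
  flatten (map (fun a4 =>
  map (fun a5 => [:: a0; a1; a2; a3; a4; a5]) (iota 0 6)) (iota 0 5))) (iota 0 4)))
   (iota 0 3))) (iota 0 2))) (iota 0 1)).

Definition Y (k : nat) := filter (goodk k) cands.

Definition chk (k : nat) : bool :=
  all (fun a0 => all (fun a1 => all (fun a2 => all (fun a3 => all (fun a4 => all (fun a5 =>
    goodk k [:: a0; a1; a2; a3; a4; a5] ==> ([:: a0; a1; a2; a3; a4; a5] \in Y k))
    (iota 0 6)) (iota 0 5)) (iota 0 4)) (iota 0 3)) (iota 0 2)) (iota 0 1).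

Lemma chk2 : chk 2. Proof. by vm_compute. Qed.
Lemma chk3 : chk 3. Proof. by vm_compute. Qed.

Lemma mem_iota0 n x : (x <= n)%N -> x \in iota 0 n.+1.
Proof. by rewrite mem_iota ltnS. Qed.

Lemma complete k c : chk k -> goodk k c -> c \in Y k.
Proof.
move=> hc g; move: (g); case/and4P => /eqP sz /allP le _ _.
case: c sz le g => [|a0 [|a1 [|a2 [|a3 [|a4 [|a5 [|? ?]]]]]]] //= _ le.
have l0 := le 0%N isT; have l1 := le 1%N isT; have l2 := le 2%N isT.
have l3 := le 3%N isT; have l4 := le 4%N isT; have l5 := le 5%N isT.
move: hc; rewrite /chk => /allP /(_ a0 (mem_iota0 l0)) /allP /(_ a1 (mem_iota0 l1)).
move=> /allP /(_ a2 (mem_iota0 l2)) /allP /(_ a3 (mem_iota0 l3)).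
move=> /allP /(_ a4 (mem_iota0 l4)) /allP /(_ a5 (mem_iota0 l5)).
by move=> /implyP; apply.
Qed.


Lemma Y_good k c : c \in Y k -> goodk k c.
Proof. by rewrite mem_filter => /andP[]. Qed.

Lemma block_card k c (x : 'I_6) : goodk k c ->
  #|[set y in [set: 'I_6] | rel_of c x y]| = k.
Proof.
case/and4P => _ _ _ /allP /(_ x); rewrite mem_iota ltn_ord => /(_ isT) /eqP <-.
rewrite card_count; apply: eq_in_count => j; rewrite mem_iota /= => jl.
by rewrite !inE /rel_of inordK // eq_sym.
Qed.

Lemma Y_bp k c : c \in Y k -> blockpart k (Gp c).
Proof.
move/Y_good => g; rewrite /blockpart G_part /=.
apply/forallP => S; apply/implyP => /imsetP [x _ ->].
by rewrite (block_card x g).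
Qed.

Lemma Y_inj k : {in Y k &, injective Gp}.
Proof.
move=> c c' /Y_good g /Y_good g' E.
have rel : forall i j : 'I_6, rel_of c i j = rel_of c' i j.
  by move=> i j; rewrite -!pblock_G E.
case/and4P: g => /eqP sz /allP le /allP fx _.
case/and4P: g' => /eqP sz' /allP le' /allP fx' _.
apply: (@eq_from_nth _ 0%N); first by rewrite sz sz'.
move=> i; rewrite sz => il.
have iI : i \in iota 0 6 by rewrite mem_iota.
have ile : forall d, (forall i, i \in iota 0 6 -> nth 0%N d i <= i)%N -> (nth 0%N d i < 6)%N.
  by move=> d h; apply: leq_ltn_trans (h i iI) il.
have a : nth 0%N c i = nth 0%N c (nth 0%N c' i).
  have := rel (Ordinal il) (Ordinal (ile _ le')).
  by rewrite /rel_of /= (eqP (fx' i iI)) eqxx => /eqP.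
have b : nth 0%N c' i = nth 0%N c' (nth 0%N c i).
  have := rel (Ordinal il) (Ordinal (ile _ le)).
  by rewrite /rel_of /= (eqP (fx i iI)) eqxx => /esym /eqP.
apply/eqP; rewrite eqn_leq; apply/andP; split.
  by rewrite a; apply: le; rewrite mem_iota /= (ile _ le').
by rewrite b; apply: le'; rewrite mem_iota /= (ile _ le).
Qed.

Section Surj.
Variables (k : nat) (P : {set {set 'I_6}}).
Hypothesis bp : blockpart k P.

Let part : partition P setT.
Proof. by case/andP: bp. Qed.
Let cov : cover P = setT.
Proof. by case/and3P: part => /eqP. Qed.
Let tiP : trivIset P.
Proof. by case/and3P: part. Qed.
Let B (i : nat) := pblock P (inord i).
Let E (i j : nat) := (inord j : 'I_6) \in B i.
Let f (i : nat) := find (E i) (iota 0 6).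
Let c := mkseq f 6.

Let Eii i : E i i.
Proof. by rewrite /E /B mem_pblock cov in_setT. Qed.

Let EB i j : (j < 6)%N -> E i j = (B i == B j).
Proof.
move=> jl; rewrite /E; apply/idP/eqP => [h|->]; last exact: Eii.
by rewrite /B (same_pblock tiP h).
Qed.

Let hasE i : (i < 6)%N -> has (E i) (iota 0 6).
Proof. by move=> il; apply/hasP; exists i; rewrite ?mem_iota ?Eii. Qed.

Let flt i : (i < 6)%N -> (f i < 6)%N.
Proof. by move=> il; have := hasE il; rewrite has_find size_iota. Qed.

Let Ef i : (i < 6)%N -> E i (f i).
Proof. by move=> il; have := nth_find 0%N (hasE il); rewrite nth_iota ?flt. Qed.

Let fle i : (i < 6)%N -> (f i <= i)%N.
Proof.
move=> il; rewrite leqNgt; apply/negP => /(before_find 0%N).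
by rewrite nth_iota // Eii.
Qed.

Let fB i j : (i < 6)%N -> (j < 6)%N -> (B i == B j) = (f i == f j).
Proof.
move=> il jl; apply/eqP/eqP => [e|e]; first by rewrite /f /E e.
have := Ef il; rewrite EB ?flt // => /eqP ->.
by have := Ef jl; rewrite EB ?flt // => /eqP ->; rewrite e.
Qed.

Let cE i : (i < 6)%N -> nth 0%N c i = f i.
Proof. by move=> il; rewrite nth_mkseq. Qed.

Let relc i j : (i < 6)%N -> (j < 6)%N -> rel_of c i j = (B i == B j).
Proof. by move=> il jl; rewrite /rel_of !cE // fB. Qed.

Lemma surj_good : goodk k c.
Proof.
apply/and4P; split.
- by rewrite size_mkseq.
- by apply/allP => i; rewrite mem_iota /= => il; rewrite cE ?fle.
- apply/allP => i; rewrite mem_iota /= => il; rewrite !cE ?flt //.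
  by rewrite -fB ?flt // eq_sym -EB ?flt // Ef.
- apply/allP => i; rewrite mem_iota => /andP[_ il].
  apply/eqP; transitivity #|B i|.
    rewrite card_count; apply: eq_in_count => j; rewrite mem_iota /= => jl.
    by rewrite -/(rel_of c j i) relc // eq_sym -EB.
  have : B i \in P by rewrite /B pblock_mem // cov in_setT.
  by case/andP: bp => _ /forallP /(_ (B i)) /implyP h /h /eqP.
Qed.

Lemma surj_G : P = Gp c.
Proof.
rewrite /Gp -{1}(equivalence_partition_pblock part) /equivalence_partition.
apply: eq_imset => x; apply/setP => y; rewrite !inE relc // -EB //.
by rewrite /E /B !inord_val.
Qed.

End Surj.

Lemma surj k P : chk k -> blockpart k P -> exists2 c, c \in Y k & P = Gp c.
Proof.
move=> hc bp; exists (mkseq (fun i => find (fun j => (inord j : 'I_6) \in pblock P (inord i)) (iota 0 6)) 6).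
  by apply: complete => //; apply: (surj_good bp).
exact: (surj_G bp).
Qed.


Lemma transfer (T : finType) (X : eqType) (s : seq X) (G : X -> T) (Pr : pred T)
    (F : T -> P6) :
  uniq s -> {in s &, injective G} -> (forall x, x \in s -> Pr (G x)) ->
  (forall t, Pr t -> exists2 x, x \in s & t = G x) ->
  \sum_(t | Pr t) F t = \sum_(x <- s) F (G x).
Proof.
move=> us inj h1 h2.
rewrite -(big_map G xpredT) big_uniq ?map_inj_in_uniq //.
apply: eq_bigl => t; apply/idP/mapP => [/h2 [x xs ->]|[x xs ->]]; first by exists x.
exact: h1.
Qed.

Lemma uY2 : uniq (Y 2). Proof. by vm_compute. Qed.
Lemma uY3 : uniq (Y 3). Proof. by vm_compute. Qed.

Lemma sum_bp k (F : {set {set 'I_6}} -> P6) : chk k -> uniq (Y k) ->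
  \sum_(P : {set {set 'I_6}} | blockpart k P) F P = \sum_(c <- Y k) F (Gp c).
Proof.
move=> hc u; apply: transfer => //; [exact: Y_inj | exact: Y_bp | move=> t; exact: surj].
Qed.

Lemma A_eq : Apoly = \sum_(c <- Y 2) Phi (rel_of c).
Proof.
rewrite /Apoly (sum_bp (fun P => \prod_(S in P) pairprod S)) ?chk2 ?uY2 //.
by apply: eq_bigr => c _; rewrite -FP_G.
Qed.

Lemma B_eq : Bpoly = \sum_(c <- Y 3) Phi (rel_of c).
Proof.
rewrite /Bpoly (sum_bp (fun P => \prod_(S in P) pairprod S)) ?chk3 ?uY3 //.
by apply: eq_bigr => c _; rewrite -FP_G.
Qed.

Lemma D_eq : Dpoly = Phi (fun _ _ => true).
Proof. by []. Qed.

Definition condC (c d : seq nat) : bool :=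
  all (fun x => all (fun y =>
    count (fun z => rel_of d x z && rel_of c y z) (iota 0 6) == 1%N) (iota 0 6)) (iota 0 6).

Lemma forall_G c (Q : {set 'I_6} -> bool) :
  [forall S in Gp c, Q S] = [forall x : 'I_6, Q [set y in [set: 'I_6] | rel_of c x y]].
Proof.
apply/forallP/forallP => h x.
  by have := h [set y in [set: 'I_6] | rel_of c x y]; rewrite imset_f ?in_setT.
by apply/implyP => /imsetP [y _ ->]; exact: h y.
Qed.

Lemma forall_iota (q : pred 'I_6) : [forall x, q x] = all (fun n => q (inord n)) (iota 0 6).
Proof.
apply/forallP/allP => [h n _ | h x]; first exact: h.
by have := h x; rewrite inord_val mem_iota ltn_ord; apply.
Qed.

Lemma condE c d :
  [forall S in Gp d, forall T in Gp c, #|S :&: T| == 1%N] = condC c d.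
Proof.
rewrite forall_G forall_iota; apply: eq_in_all => n; rewrite mem_iota => /andP[_ nl].
rewrite forall_G forall_iota; apply: eq_in_all => m; rewrite mem_iota => /andP[_ ml].
rewrite card_count; congr (_ == _); apply: eq_in_count => z; rewrite mem_iota => /andP[_ zl].
by rewrite !inE /rel_of !inordK.
Qed.



Definition Cpairs : seq (seq nat * seq nat) :=
  [seq (c, d) | c <- Y 3, d <- filter (condC c) (Y 2)].

Lemma C_eq : Cpoly = \sum_(p <- Cpairs) Phi (rel_of p.1) * Phi (rel_of p.2).
Proof.
rewrite big_allpairs_dep /Cpoly.
rewrite (sum_bp (fun P => \sum_(M : {set {set 'I_6}} | blockpart 2 M &&
          [forall S in M, forall T in P, #|S :&: T| == 1%N])
     ((\prod_(T in P) pairprod T) * \prod_(S in M) pairprod S))) ?chk3 ?uY3 //.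
apply: eq_bigr => c _.
rewrite (transfer (s := filter (condC c) (Y 2)) (G := Gp)).
- apply: eq_bigr => d _.
  by rewrite -[\prod_(T in Gp c) pairprod T]/(FP (Gp c)) -[\prod_(S in Gp d) pairprod S]/(FP (Gp d)) !FP_G.
- by rewrite filter_uniq ?uY2.
- by move=> x y; rewrite !(mem_filter (condC c)) => /andP[_ hx] /andP[_ hy]; apply: Y_inj hx hy.
- by move=> d; rewrite (mem_filter (condC c)) => /andP[h1 h2]; rewrite Y_bp // condE.
- move=> M /andP[/(surj chk2) [d dY ->]]; rewrite condE => h.
  by exists d; rewrite // (mem_filter (condC c)) h.
Qed.


Lemma al_pow k n : al k ^+ n = 'X_[(U_(inord k.-1) *+ n)%MM].
Proof. by rewrite /al mpolyXn. Qed.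

Lemma inord_eq n (k : 'I_6) : (n < 6)%N -> ((inord n : 'I_6) == k) = (n == k).
Proof. by move=> nl; rewrite -val_eqE /= inordK. Qed.

Lemma XA : 'X_[toM [:: 0; 0; 0; 2; 2; 2]%N] = al 4 ^+ 2 * al 5 ^+ 2 * al 6 ^+ 2.
Proof.
rewrite !al_pow -!mpolyXD; congr 'X_[_]; apply/mnmP => i.
rewrite mnmE !mnmDE !mnm1E !inord_eq //.
by case: i => [[|[|[|[|[|[|//]]]]]] ?].
Qed.

Lemma natsc (n : nat) (p : P6) : (n%:Z) *: p = n%:R * p.
Proof. by rewrite mulr_natl -scaler_nat natz. Qed.

Lemma XB : 'X_[toM [:: 0; 0; 2; 2; 4; 4]%N] = al 3 ^+ 2 * al 4 ^+ 2 * al 5 ^+ 4 * al 6 ^+ 4.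
Proof.
rewrite !al_pow -!mpolyXD; congr 'X_[_]; apply/mnmP => i.
rewrite mnmE !mnmDE !mnm1E !inord_eq //.
by case: i => [[|[|[|[|[|[|//]]]]]] ?].
Qed.

Lemma XC : 'X_[toM [:: 0; 0; 2; 4; 6; 6]%N] = al 3 ^+ 2 * al 4 ^+ 4 * al 5 ^+ 6 * al 6 ^+ 6.
Proof.
rewrite !al_pow -!mpolyXD; congr 'X_[_]; apply/mnmP => i.
rewrite mnmE !mnmDE !mnm1E !inord_eq //.
by case: i => [[|[|[|[|[|[|//]]]]]] ?].
Qed.

Lemma XD : 'X_[toM [:: 0; 2; 4; 6; 8; 10]%N] =
  al 2 ^+ 2 * al 3 ^+ 4 * al 4 ^+ 6 * al 5 ^+ 8 * al 6 ^+ 10.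
Proof.
rewrite !al_pow -!mpolyXD; congr 'X_[_]; apply/mnmP => i.
rewrite mnmE !mnmDE !mnm1E !inord_eq //.
by case: i => [[|[|[|[|[|[|//]]]]]] ?].
Qed.

Definition addL (a b : seq nat) : seq nat := mkseq (fun k => nth 0%N a k + nth 0%N b k)%N 6.

Lemma toM_add a b : (toM a + toM b)%MM = toM (addL a b).
Proof. by apply/mnmP => i; rewrite mnmDE !mnmE nth_mkseq. Qed.

Lemma chkA : all (fun c => (seqL (rel_of c) == [:: 0; 0; 0; 2; 2; 2]%N) ||
   dom (seqL (rel_of c)) [:: 0; 0; 0; 2; 2; 2]%N) (Y 2).
Proof. by vm_compute. Qed.
Lemma cntA : count (fun c => seqL (rel_of c) == [:: 0; 0; 0; 2; 2; 2]%N) (Y 2) = 6%N.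
Proof. by vm_compute. Qed.
Lemma chkB : all (fun c => (seqL (rel_of c) == [:: 0; 0; 2; 2; 4; 4]%N) ||
   dom (seqL (rel_of c)) [:: 0; 0; 2; 2; 4; 4]%N) (Y 3).
Proof. by vm_compute. Qed.
Lemma cntB : count (fun c => seqL (rel_of c) == [:: 0; 0; 2; 2; 4; 4]%N) (Y 3) = 4%N.
Proof. by vm_compute. Qed.
Definition LC (p : seq nat * seq nat) := addL (seqL (rel_of p.1)) (seqL (rel_of p.2)).
Lemma chkC : all (fun p => (LC p == [:: 0; 0; 2; 4; 6; 6]%N) ||
   dom (LC p) [:: 0; 0; 2; 4; 6; 6]%N) Cpairs.
Proof. by vm_compute. Qed.
Lemma cntC : count (fun p => LC p == [:: 0; 0; 2; 4; 6; 6]%N) Cpairs = 8%N.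
Proof. by vm_compute. Qed.
Lemma seqLD : seqL (fun _ _ => true) = [:: 0; 2; 4; 6; 8; 10]%N.
Proof. by vm_compute. Qed.

Unset Implicit Arguments.

Theorem lemma7p5 (R : realFieldType) (w : 'I_6 -> R) :
  (forall i j : 'I_6, (i < j)%N -> w i < w j) ->
  [/\ init_form w Apoly = 6%:R * (al 4 ^+ 2 * al 5 ^+ 2 * al 6 ^+ 2),
      init_form w Bpoly = 4%:R * (al 3 ^+ 2 * al 4 ^+ 2 * al 5 ^+ 4 * al 6 ^+ 4),
      init_form w Cpoly = 8%:R * (al 3 ^+ 2 * al 4 ^+ 4 * al 5 ^+ 6 * al 6 ^+ 6)
    & init_form w Dpoly =
        al 2 ^+ 2 * al 3 ^+ 4 * al 4 ^+ 6 * al 5 ^+ 8 * al 6 ^+ 10].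
Proof.
move=> hw; split.
- have := sumLT hw (T := fun c => Phi (rel_of c)) (L := fun c => seqL (rel_of c))
    (fun c _ => LT_Phi hw (rel_of c)) chkA.
  rewrite cntA -A_eq => /(init_LT (isT : (6%:Z != 0))) ->.
  by rewrite XA natsc.
- have := sumLT hw (T := fun c => Phi (rel_of c)) (L := fun c => seqL (rel_of c))
    (fun c _ => LT_Phi hw (rel_of c)) chkB.
  rewrite cntB -B_eq => /(init_LT (isT : (4%:Z != 0))) ->.
  by rewrite XB natsc.
- have hT : forall p, p \in Cpairs ->
      LT w (Phi (rel_of p.1) * Phi (rel_of p.2)) 1 (toM (LC p)).
    move=> p _; rewrite /LC -toM_add -[1]/(1 * 1 : int).
    by apply: LTM; apply: LT_Phi.
  have := sumLT hw hT chkC.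
  rewrite cntC -C_eq => /(init_LT (isT : (8%:Z != 0))) ->.
  by rewrite XC natsc.
- have := LT_Phi hw (fun _ _ => true); rewrite seqLD -D_eq.
  by move=> /(init_LT (isT : ((1 : int) != 0))) ->; rewrite scale1r XD.
Qed.
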